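(* Let $X$ and $Y$ be connected graphs with degree bounded by $D$ and $f\colon X\to Y$ an $(L,A)$-quasi-isometry. For any $\alpha>0$ let $\beta\coloneqq D^{-L(A+2)-A-2}\alpha$. Then the preimage of a $\beta$-small subset of $Y$ is $\alpha$-small in $X$.
   Context: Connected graphs are metric spaces with the path-length metric on vertices. An $(L,A)$-quasi-isometry is a map $f\colon X\to Y$ with $\frac1L d_X(x,x')-A\leq d_Y(f(x),f(x'))\leq L d_X(x,x')+A$ for all $x,x'$, and such that every $y\in Y$ is within distance $A$ of $f(X)$. A subset $S$ of a finite graph $Z$ is $\alpha$-small if $|S|<\alpha|Z|$, where $|\cdot|$ denotes number of vertices. *)

(* Defs.v *)
From HB Require Import structures.
From mathcomp Require Import all_boot all_order all_algebra.
From mathcomp Require Import reals exp.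
Set Implicit Arguments. Unset Strict Implicit. Unset Printing Implicit Defensive.
Import Order.TTheory GRing.Theory Num.Theory.

Definition simple_graph (T : finType) (e : rel T) : Prop :=
  symmetric e /\ irreflexive e.

Definition connected_graph (T : finType) (e : rel T) : Prop :=
  (0 < #|T|)%N /\ forall x y : T, connect e x y.

Definition degree_bounded (T : finType) (e : rel T) (D : nat) : Prop :=
  forall x : T, (#|[set y | e x y]| <= D)%N.

Definition walk_of (T : finType) (e : rel T) (n : nat) (x y : T) : bool :=
  [exists p : n.-tuple T, path e x p && (last x p == y)].

(* path-length metric: the least n such that there is a walk of length n
   from x to y (for a connected graph this is < #|T|). *)
Definition gdist (T : finType) (e : rel T) (x y : T) : nat :=
  find (fun n => walk_of e n x y) (iota 0 #|T|).

Local Open Scope ring_scope.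

Definition quasi_isometry (R : realType) (TX TY : finType)
    (eX : rel TX) (eY : rel TY) (L A : R) (f : TX -> TY) : Prop :=
  (forall x x' : TX,
      L^-1 * (gdist eX x x')%:R - A <= (gdist eY (f x) (f x'))%:R /\
      (gdist eY (f x) (f x'))%:R <= L * (gdist eX x x')%:R + A)
  /\ (forall y : TY, exists x : TX, (gdist eY y (f x))%:R <= A).

Definition small (R : realType) (T : finType) (alpha : R) (S : {set T}) : Prop :=
  (#|S|%:R < alpha * #|T|%:R).

(* Main.v *)
Require Import Defs.
From mathcomp Require Import all_boot all_order all_algebra reals exp.
From mathcomp Require Import ring.
Import Order.TTheory GRing.Theory Num.Theory.
Set Implicit Arguments. Unset Strict Implicit.

Section Ball.
Variables (T : finType) (e : rel T) (D : nat).
Hypothesis esym : symmetric e.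
Hypothesis Dge : (2 <= D)%N.
Hypothesis degb : degree_bounded e D.

Lemma walk0 x y : walk_of e 0 x y = (x == y).
Proof.
apply/existsP/idP => [[p /andP[_]]|/eqP->].
  by rewrite tuple0.
by exists [tuple]; rewrite /= eqxx.
Qed.

Lemma walkS j y c : walk_of e j.+1 y c -> exists2 z, walk_of e j z c & e z y.
Proof.
case/existsP => p; case/tupleP: p => z p /= /andP[/andP[eyz pp] lp].
exists z; last by rewrite esym.
by apply/existsP; exists p; rewrite pp lp.
Qed.

Lemma cardW j c : (#|[set y | walk_of e j y c]| <= D ^ j)%N.
Proof.
elim: j => [|j IH].
  rewrite expn0 -(cards1 c).
  by apply: subset_leq_card; apply/subsetP => y; rewrite !inE walk0.
set W := [set y | walk_of e j y c].
apply: (@leq_trans #|\bigcup_(z in W) [set y | e z y]|).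
  apply: subset_leq_card; apply/subsetP => y; rewrite inE => /walkS [z wz ezy].
  by apply/bigcupP; exists z; rewrite !inE.
apply: leq_trans (unstable.card_big_setU _ _ _) _.
apply: (@leq_trans (\sum_(z in W) D)).
  by apply: leq_sum => z _; apply: degb.
rewrite sum_nat_const expnS mulnC; exact: leq_mul.
Qed.

Lemma gdist_walk y c : (gdist e y c < #|T|)%N -> walk_of e (gdist e y c) y c.
Proof.
rewrite /gdist => H.
have hs : has (fun n => walk_of e n y c) (iota 0 #|T|).
  by rewrite has_find size_iota.
by have := nth_find 0 hs; rewrite nth_iota ?add0n // -{2}(size_iota 0 #|T|) -has_find.
Qed.

Lemma sum_pow k : (\sum_(j < k.+1) D ^ j <= D ^ k.+1)%N.
Proof.
elim: k => [|k IH]; first by rewrite big_ord1 expn0 expn1 (leq_trans _ Dge).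
rewrite big_ord_recr /= (expnS D k.+1).
apply: (@leq_trans (D ^ k.+1 + D ^ k.+1)); first by rewrite leq_add2r.
by rewrite addnn -mul2n leq_mul2r Dge orbT.
Qed.

Lemma card_ball c k : (#|[set y | (gdist e y c <= k)%N]| <= D ^ k.+1)%N.
Proof.
case: (leqP #|T| k) => Hk.
  apply: leq_trans (max_card _) _.
  apply: leq_trans Hk _; apply: ltnW; apply: (leq_trans (ltn_expl k (isT : 1 < 2)%N)).
  apply: (@leq_trans (2 ^ k.+1)); first by rewrite leq_exp2l.
  by rewrite leq_exp2r.
apply: (@leq_trans #|\bigcup_(j < k.+1) [set y | walk_of e j y c]|).
  apply: subset_leq_card; apply/subsetP => y; rewrite inE => hy.
  apply/bigcupP; exists (Ordinal (hy : gdist e y c < k.+1)%N) => //.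
  by rewrite inE; apply: gdist_walk; apply: leq_ltn_trans hy Hk.
apply: leq_trans (unstable.card_big_setU _ _ _) _.
apply: leq_trans (sum_pow k).
by apply: leq_sum => j _; apply: cardW.
Qed.
End Ball.

Local Open Scope ring_scope.

Lemma gdist_refl (T : finType) (e : rel T) x : gdist e x x = 0%N.
Proof.
rewrite /gdist; have : (0 < #|T|)%N by apply/card_gt0P; exists x.
case: #|T| => // n _ /=; by rewrite walk0 eqxx.
Qed.

Unset Implicit Arguments.
Unset Strict Implicit.

Theorem lemma2p5 (R : realType) (TX TY : finType) (eX : rel TX) (eY : rel TY)
    (D : nat) (L A : R) (f : TX -> TY) (alpha : R) :
  simple_graph eX -> simple_graph eY ->
  connected_graph eX -> connected_graph eY ->
  (2 <= D)%N -> degree_bounded eX D -> degree_bounded eY D ->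
  0 < L -> quasi_isometry eX eY L A f ->
  0 < alpha ->
  let beta := (D%:R `^ (- (L * (A + 2)) - A - 2)) * alpha in
  forall S : {set TY}, small beta S -> small alpha (f @^-1: S).
Proof.
move=> [sX _] [sY _] [nX _] [nY _] D2 dX dY L0 [qi surj] a0 beta S.
rewrite /small => hS.
have [y0 _] : exists y0 : TY, true by case/card_gt0P: nY => y _; exists y.
have A0 : 0 <= A by case: (surj y0) => x; apply: le_trans.
have LA0 : 0 <= L * A by rewrite mulr_ge0 // ltW.
set KX := Num.truncn (L * A); set KY := Num.truncn A.
have step1 : (#|f @^-1: S| <= #|S| * D ^ KX.+1)%N.
  apply: (@leq_trans #|\bigcup_(y in S) f @^-1: [set y]|).
    apply: subset_leq_card; apply/subsetP => x; rewrite inE => hx.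
    by apply/bigcupP; exists (f x) => //; rewrite !inE.
  apply: leq_trans (unstable.card_big_setU _ _ _) _.
  rewrite -sum_nat_const; apply: leq_sum => y _.
  case: (pickP (fun x => f x == y)) => [x0 /eqP fx0 | none]; last first.
    by rewrite (_ : f @^-1: [set y] = set0) ?cards0 //; apply/setP => x; rewrite !inE none.
  apply: leq_trans (card_ball sX D2 dX x0 KX).
  apply: subset_leq_card; apply/subsetP => x; rewrite !inE => /eqP fx.
  rewrite truncn_ge_nat //.
  have [h _] := qi x x0; move: h; rewrite fx fx0 gdist_refl subr_le0.
  by rewrite ler_pdivrMl.
have step2 : (#|TY| <= #|TX| * D ^ KY.+1)%N.
  apply: (@leq_trans #|\bigcup_(x in TX) [set y | (gdist eY y (f x) <= KY)%N]|).
    rewrite -cardsT; apply: subset_leq_card; apply/subsetP => y _.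
    case: (surj y) => x hx; apply/bigcupP; exists x => //.
    by rewrite inE truncn_ge_nat.
  apply: leq_trans (unstable.card_big_setU _ _ _) _.
  rewrite -sum_nat_const; apply: leq_sum => x _.
  exact: card_ball.
set d : R := D%:R.
have d1 : 1 <= d by rewrite /d ler1n; apply: leq_trans D2.
have d0 : 0 < d by apply: lt_le_trans d1.
have powD r s : d `^ (r + s) = d `^ r * d `^ s.
  by rewrite powRD //; apply/implyP => _; rewrite gt_eqF.
have hP1 : ((D ^ KX.+1)%:R : R) <= d `^ (L * A + 1).
  rewrite natrX -powR_mulrn ?(ltW d0) //; apply: (ler_powR d1).
  by rewrite -natr1 lerD2r truncn_le.
have hP2 : ((D ^ KY.+1)%:R : R) <= d `^ (A + 1).
  rewrite natrX -powR_mulrn ?(ltW d0) //; apply: (ler_powR d1).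
  by rewrite -natr1 lerD2r truncn_le.
set P1 := d `^ (L * A + 1); set P2 := d `^ (A + 1).
have P10 : 0 < P1 by apply: powR_gt0.
have P20 : 0 < P2 by apply: powR_gt0.
have s1 : #|f @^-1: S|%:R <= #|S|%:R * P1.
  apply: le_trans (_ : (#|S| * D ^ KX.+1)%:R <= _); first by rewrite ler_nat.
  by rewrite natrM ler_wpM2l.
have s2 : #|TY|%:R <= #|TX|%:R * P2.
  apply: le_trans (_ : (#|TX| * D ^ KY.+1)%:R <= _); first by rewrite ler_nat.
  by rewrite natrM ler_wpM2l.
have key : d `^ (- (L * (A + 2)) - A - 2) * P1 * P2 <= 1.
  have hE : - (L * (A + 2)) - A - 2 + (L * A + 1) + (A + 1) <= 0.
    have -> : - (L * (A + 2)) - A - 2 + (L * A + 1) + (A + 1) = - (L * 2) by ring.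
    by rewrite oppr_le0 mulr_ge0 // ltW.
  rewrite /P1 /P2 -!powD; apply: le_trans (ler_powR d1 hE) _; by rewrite powRr0.
apply: le_lt_trans s1 _.
apply: (@lt_le_trans _ _ (beta * #|TY|%:R * P1)); first by rewrite ltr_pM2r.
apply: (@le_trans _ _ (beta * (#|TX|%:R * P2) * P1)).
  apply: ler_wpM2r; first exact: ltW.
  apply: ler_wpM2l => //; rewrite /beta mulr_ge0 ?powR_ge0 //; exact: ltW.
have -> : beta * (#|TX|%:R * P2) * P1 = alpha * #|TX|%:R * (d `^ (- (L * (A + 2)) - A - 2) * P1 * P2).
  by rewrite /beta /d; ring.
rewrite ler_piMr // mulr_ge0 // ltW //.
Qed.
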